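(* Let $\ell\ge2$, let $A_1,\dots,A_\ell$ be pairwise disjoint finite nonempty sets, $V=A_1\cup\dots\cup A_\ell$, and $\mathcal A=\{A_1,\dots,A_\ell\}$. Let $\mathcal S$ be a family of $\ell$-element subsets of $V$ with $|S\cap A_i|=1$ for all $S\in\mathcal S$ and all $i$, such that $|S\setminus T|$ is odd for all distinct $S,T\in\mathcal S$. For $X\subseteq V$ let $\vec X\in\mathbb F_2^V$ be its characteristic vector. Suppose $|\mathcal S|$ is odd and the vectors $\{\vec X: X\in\mathcal S\cup\mathcal A\}$ satisfy a nontrivial linear dependency $\sum_{X\in\mathcal S\cup\mathcal A}\alpha(X)\vec X=0$ with $\alpha(X)\in\mathbb F_2$ not all zero. Then this dependency is unique and $\alpha(X)=1$ for every $X\in\mathcal S\cup\mathcal A$.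
   Context: $\mathbb F_2$ is the two-element field. *)

(* Defs.v *)
From HB Require Import structures.
From mathcomp Require Import all_boot all_order all_algebra.
Set Implicit Arguments. Unset Strict Implicit. Unset Printing Implicit Defensive.
Import GRing.Theory.
Local Open Scope ring_scope.

Definition charvec (V : finType) (X : {set V}) : {ffun V -> ('F_2)^o} :=
  [ffun v => (v \in X)%:R].

(* Main.v *)
Require Import Defs.
From HB Require Import structures.
From mathcomp Require Import all_boot all_order all_algebra.
Import GRing.Theory.
Local Open Scope ring_scope.
Lemma F2_cases (x : 'F_2) : x = 0 \/ x = 1.
Proof. case: x => [[|[|n]] H]; [left|right|]; try by apply: val_inj. by []. Qed.
Lemma F2_11 : (1 + 1 : 'F_2) = 0. Proof. by apply/eqP. Qed.
Lemma F2_nat n : (n%:R : 'F_2) = (odd n)%:R.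
Proof. elim: n => // n IH. rewrite -[n.+1]addn1 natrD IH oddD /=. by case: (odd n) => /=; rewrite ?F2_11 ?add0r. Qed.
Lemma F2_eq (a b : 'F_2) : a + b = 0 -> a = b.
Proof. by case: (F2_cases a) => ->; case: (F2_cases b) => ->; rewrite ?F2_11 ?addr0 ?add0r // => /eqP; rewrite oner_eq0. Qed.
Lemma sum_card (V : finType) (X Y : {set V}) :
  \sum_(v in Y) ((v \in X)%:R : 'F_2) = #|X :&: Y|%:R.
Proof.
rewrite (bigID (mem X)) /= [X in _ + X]big1 ?addr0; last by move=> v /andP[_ /negbTE ->].
rewrite (eq_bigr (fun _ => 1)); last by move=> v /andP[_ ->].
rewrite sumr_const; congr (_%:R); apply: eq_card => v; rewrite !inE andbC //.
Qed.

Theorem lemma3p2 (l : nat) (V : finType) (A : 'I_l -> {set V})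
  (SS : {set {set V}}) (alpha : {set V} -> 'F_2) :
  (2 <= l)%N ->
  (forall i j, i != j -> [disjoint A i & A j]) ->
  (forall i, A i != set0) ->
  \bigcup_(i < l) A i = [set: V] ->
  (forall S, S \in SS -> #|S| = l) ->
  (forall S i, S \in SS -> #|S :&: A i| = 1%N) ->
  (forall S T, S \in SS -> T \in SS -> S != T -> odd #|S :\: T|) ->
  odd #|SS| ->
  \sum_(X in SS :|: [set A i | i : 'I_l]) alpha X *: charvec X = 0 ->
  (exists2 X, X \in SS :|: [set A i | i : 'I_l] & alpha X != 0) ->
  forall X, X \in SS :|: [set A i | i : 'I_l] -> alpha X = 1.
Proof.
move=> l2 disA neA covA cardS cardSA oddST oddSS Hsum [X0 HX0 aX0] X HX.
have AII i j : #|A i :&: A j| = if i == j then #|A j| else 0%N.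
  case: eqP => [-> | /eqP ne]; first by rewrite setIid.
  by move: (disA _ _ ne); rewrite -setI_eq0 => /eqP ->; rewrite cards0.
have injA : injective A.
  move=> i j eqA; apply/eqP; apply/negPn/negP => ne.
  have := AII i j; rewrite (negbTE ne) eqA setIid => /eqP; rewrite cards_eq0.
  by move/negP: (neA j).
have disU : [disjoint SS & [set A i | i : 'I_l]].
  rewrite disjoint_sym; apply/pred0P => Y /=; apply/negP => /andP[/imsetP[i _ ->] Hi].
  have [j ne] : exists j, j != i.
    case: (eqVneq i (Ordinal l2)) => [-> | ne]; last by exists (Ordinal l2); rewrite eq_sym.
    have l0 : (0 < l)%N by apply: leq_trans l2.
    by exists (Ordinal l0); apply/eqP => /(congr1 val).
  by have := cardSA _ j Hi; rewrite AII eq_sym (negbTE ne).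
have splitU (F : {set V} -> 'F_2) : \sum_(X in SS :|: [set A i | i : 'I_l]) F X =
    \sum_(X in SS) F X + \sum_(i < l) F (A i).
  rewrite (bigID (mem SS)) /=; congr (_ + _).
    by apply: eq_bigl => Y; rewrite in_setU; case: (Y \in SS); rewrite ?andbF.
  rewrite (eq_bigl (mem [set A i | i : 'I_l])); last first.
    move=> Y /=; rewrite in_setU.
    case HY: (Y \in [set A i | i : 'I_l]); first by rewrite (disjointFl disU HY).
    by rewrite orbF andbN.
  by rewrite big_imset //= => i j _ _ /injA.
have pt v : \sum_(X in SS :|: [set A i | i : 'I_l]) alpha X * (v \in X)%:R = 0.
  have := congr1 (fun f : {ffun V -> ('F_2)^o} => f v) Hsum; rewrite sum_ffunE ffunE => h.
  rewrite -[RHS]h; apply: eq_bigr => Y _; by rewrite !ffunE.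
have keyY (Y : {set V}) : \sum_(X in SS :|: [set A i | i : 'I_l]) alpha X * #|X :&: Y|%:R = 0.
  transitivity (\sum_(v in Y) \sum_(X in SS :|: [set A i | i : 'I_l]) alpha X * (v \in X)%:R); last first.
    by apply: big1 => v _; exact: pt v.
  rewrite exchange_big /=; apply: eq_bigr => Z _.
  by rewrite -sum_card mulr_sumr.
set c := \sum_(S in SS) alpha S.
set B := \sum_(i < l) alpha (A i).
have STn S T : S \in SS -> T \in SS -> (#|S :&: T|%:R : 'F_2) = (l.+1)%:R + (S == T)%:R.
  move=> HS HT; rewrite -natrD (F2_nat #|_|) (F2_nat (l.+1 + _)); congr (_%:R).
  case: eqP => [-> | /eqP ne]; first by rewrite setIid cardS // addn1 /= negbK.
  have := cardsID T S; rewrite (cardS S HS) => h.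
  by rewrite -h addn0 /= oddD (oddST _ _ HS HT ne); case: odd.
set k := (l.+1)%:R * c + B.
have alphaS T : T \in SS -> alpha T = k.
  move=> HT; have := keyY T; rewrite splitU.
  rewrite (eq_bigr (fun S => alpha S * (l.+1)%:R + alpha S * (S == T)%:R)); last first.
    by move=> S HS; rewrite STn // mulrDr.
  rewrite big_split /= [\sum_(i in SS) alpha i * (i == T)%:R](bigD1 T) //= eqxx mulr1 [\sum_(i in SS | i != T) alpha i * (i == T)%:R]big1 ?addr0; last first.
    by move=> S /andP[_ /negbTE ->]; rewrite mulr0.
  rewrite (eq_bigr (fun i => alpha (A i))); last by move=> i _; rewrite setIC cardSA // mulr1.
  rewrite -mulr_suml -/c -/B mulrC => h; apply: F2_eq; rewrite -h /k.
  by rewrite addrC addrA.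
have ck : c = k.
  rewrite /c (eq_bigr (fun _ => k)) // sumr_const -mulr_natr F2_nat oddSS mulr1 //.
have ptA j v : v \in A j -> \sum_(S in SS) alpha S * (v \in S)%:R + alpha (A j) = 0.
  move=> Hv; have := pt v; rewrite splitU (bigD1 j) //= Hv mulr1 [\sum_(i < l | i != j) _]big1 ?addr0 //.
  move=> i ne; case Hvi: (v \in A i); last by rewrite mulr0.
  have := AII i j; rewrite (negbTE ne) => /eqP; rewrite cards_eq0 => /eqP e.
  have : v \in A i :&: A j by rewrite inE Hvi Hv.
  by rewrite e inE.
have eqA j : c + alpha (A j) * #|A j|%:R = 0.
  have := keyY (A j); rewrite splitU (eq_bigr (fun S => alpha S)); last first.
    by move=> S HS; rewrite cardSA // mulr1.
  rewrite (bigD1 j) //= [\sum_(i < l | i != j) _]big1 ?addr0 //; last by move=> i ne; rewrite AII (negbTE ne) mulr0.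
  by rewrite AII eqxx.
case: (F2_cases k) => k0.
- exfalso; move: aX0; rewrite inE in HX0; case/orP: HX0 => [HS | /imsetP[j _ ->]].
    by rewrite alphaS // k0 eqxx.
  have [v Hv] : exists v, v \in A j by apply/set0Pn.
  have := ptA j v Hv; rewrite big1 ?add0r; last by move=> S HS; rewrite alphaS // k0 mul0r.
  by move=> ->; rewrite eqxx.
- rewrite inE in HX; case/orP: HX => [HS | /imsetP[j _ ->]]; first by rewrite alphaS.
  have := eqA j; rewrite ck k0.
  by case: (F2_cases (alpha (A j))) => // ->; rewrite mul0r addr0 => /eqP; rewrite oner_eq0.
Qed.
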